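(* For every $1\le t\le m$ there exists a deterministic voting rule taking top-$t$ preference profiles as input that has metric distortion $O(m-t+1)$ and utilitarian distortion $O(m^2)$.
   Context: Setting: $n$ agents, $m$ alternatives; each agent has an underlying strict ranking, but the rule only receives each agent's ordered list of her top $t$ alternatives (a top-$t$ profile $\vec\sigma_t$). A full profile extends $\vec\sigma_t$ if each agent's top-$t$ prefix coincides with that in $\vec\sigma_t$. Metric framework: a pseudometric $d$ on agents and alternatives is consistent with a full profile $\vec\sigma$ if $X\succ_iY\Rightarrow d(i,X)\le d(i,Y)$, and consistent with $\vec\sigma_t$ if it is consistent with some full profile extending $\vec\sigma_t$. $\mathrm{SC}(X,d)=\sum_id(i,X)$. Metric distortion of a (top-$t$) rule $f$: $\sup_{\vec\sigma_t}\sup_{d}\mathbb E_{X\sim f(\vec\sigma_t)}[\mathrm{SC}(X,d)]/\min_X\mathrm{SC}(X,d)$ over consistent $d$. Utilitarian framework: unit-sum nonnegative utilities $u_i$ ($\sum_Xu_i(X)=1$), consistent with a full profile if $X\succ_iY\Rightarrow u_i(X)\ge u_i(Y)$ and with $\vec\sigma_t$ if consistent with some full extension. $\mathrm{SW}(X,\vec u)=\sum_iu_i(X)$. Utilitarian distortion: $\sup_{\vec\sigma_t}\sup_{\vec u}\max_X\mathrm{SW}(X,\vec u)/\mathbb E_{X\sim f(\vec\sigma_t)}[\mathrm{SW}(X,\vec u)]$. *)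

(* Defs.v *)
From HB Require Import structures.
From mathcomp Require Import all_boot all_order all_algebra all_fingroup.
From mathcomp Require Import reals.
Set Implicit Arguments. Unset Strict Implicit. Unset Printing Implicit Defensive.
Import Order.TTheory GRing.Theory Num.Theory.
Local Open Scope ring_scope.

(* Agents are 'I_n, alternatives are 'I_m.
   A top-t profile: st : 'I_n -> 'I_t -> 'I_m, st i k = alternative agent i ranks at
   position k (0 = top); each st i must be injective.
   A full profile is given by rank functions: rank i : {perm 'I_m}, rank i X = position
   of X in agent i's ranking (0 = top). *)

Definition prefers (n m : nat) (rank : 'I_n -> {perm 'I_m}) (i : 'I_n) (X Y : 'I_m) : Prop :=
  (rank i X < rank i Y)%N.

Definition extends (n m t : nat) (rank : 'I_n -> {perm 'I_m}) (st : 'I_n -> 'I_t -> 'I_m) : Prop :=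
  forall (i : 'I_n) (k : 'I_t), nat_of_ord (rank i (st i k)) = nat_of_ord k.

Definition is_pseudometric (R : realType) (T : Type) (d : T -> T -> R) : Prop :=
  (forall x, d x x = 0) /\ (forall x y, 0 <= d x y) /\ (forall x y, d x y = d y x) /\
  (forall x y z, d x z <= d x y + d y z).

Definition metric_consistent_full (R : realType) (n m : nat)
  (d : 'I_n + 'I_m -> 'I_n + 'I_m -> R) (rank : 'I_n -> {perm 'I_m}) : Prop :=
  forall i X Y, prefers rank i X Y -> d (inl i) (inr X) <= d (inl i) (inr Y).

Definition metric_consistent (R : realType) (n m t : nat)
  (d : 'I_n + 'I_m -> 'I_n + 'I_m -> R) (st : 'I_n -> 'I_t -> 'I_m) : Prop :=
  exists rank, extends rank st /\ metric_consistent_full d rank.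

Definition SC (R : realType) (n m : nat) (d : 'I_n + 'I_m -> 'I_n + 'I_m -> R) (X : 'I_m) : R :=
  \sum_(i < n) d (inl i) (inr X).

Definition unit_sum (R : realType) (n m : nat) (u : 'I_n -> 'I_m -> R) : Prop :=
  forall i, (forall X, 0 <= u i X) /\ \sum_(X < m) u i X = 1.

Definition util_consistent_full (R : realType) (n m : nat)
  (u : 'I_n -> 'I_m -> R) (rank : 'I_n -> {perm 'I_m}) : Prop :=
  forall i X Y, prefers rank i X Y -> u i Y <= u i X.

Definition util_consistent (R : realType) (n m t : nat)
  (u : 'I_n -> 'I_m -> R) (st : 'I_n -> 'I_t -> 'I_m) : Prop :=
  exists rank, extends rank st /\ util_consistent_full u rank.

Definition SW (R : realType) (n m : nat) (u : 'I_n -> 'I_m -> R) (X : 'I_m) : R :=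
  \sum_(i < n) u i X.

(* Main.v *)
Require Import Defs.
From HB Require Import structures.
From mathcomp Require Import all_boot all_order all_algebra all_fingroup.
From mathcomp Require Import zify.
Set Implicit Arguments. Unset Strict Implicit. Unset Printing Implicit Defensive.

Section Rule.
Variables (m t n : nat) (st : 'I_n -> 'I_t -> 'I_m).
Variable (ht : (0 < t)%N).

Definition listed i X := [exists a, st i a == X].
Definition know i W X := [exists a, (st i a == W) && [forall b, (st i b == X) ==> (a < b)%N]].
Definition Sc W X := #|[set i | know i W X]|.
Definition lcnt X := #|[set i | listed i X]|.
Definition top i := st i (Ordinal ht).
Definition pcnt X := #|[set i | top i == X]|.
Definition kk := (m - t + 1)%N.
Definition candA X := (n <= 2 * m * pcnt X)%N.
Definition candB X := (n <= 8 * kk * lcnt X)%N.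
Definition cand X := candA X && candB X.
Definition beats W X := (Sc X W <= Sc W X)%N.
Definition score W := #|[set X | cand X && beats W X]|.
Definition good W := cand W && [forall X, cand X ==> (score X <= score W)%N].

Hypothesis inj : forall i, injective (st i).

Lemma compare i W Z : listed i W -> W != Z -> know i W Z || know i Z W.
Proof.
case/existsP=> a /eqP Ha nWZ.
case: (boolP [exists b, st i b == Z]) => [/existsP [b /eqP Hb]|].
  have nab : a != b by apply/eqP=> e; move: nWZ; rewrite -Ha -Hb e eqxx.
  case: (ltngtP a b) => [lab|lba|eab]; last by move: nab; rewrite (val_inj eab) eqxx.
  - apply/orP; left; apply/existsP; exists a; rewrite Ha eqxx /=.
    by apply/forallP=> c; apply/implyP=> /eqP; rewrite -Hb => /inj ->.
  - apply/orP; right; apply/existsP; exists b; rewrite Hb eqxx /=.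
    by apply/forallP=> c; apply/implyP=> /eqP; rewrite -Ha => /inj ->.
move=> nZ; apply/orP; left; apply/existsP; exists a; rewrite Ha eqxx /=.
apply/forallP=> c; apply/implyP=> Hc; case/negP: nZ; apply/existsP; by exists c.
Qed.

Lemma lcnt_le_S W Z : W != Z -> (lcnt W <= Sc W Z + Sc Z W)%N.
Proof.
move=> nWZ; rewrite /lcnt /Sc; apply: leq_trans (leq_card_setU _ _).
apply: subset_leq_card; apply/subsetP=> i; rewrite !inE => Hl.
exact: compare Hl nWZ.
Qed.

Lemma card_listed i : #|[set X | listed i X]| = t.
Proof.
have -> : [set X | listed i X] = st i @: setT.
  apply/setP=> X; rewrite inE; apply/existsP/imsetP => [[a /eqP <-]|[a _ ->]].
    by exists a. by exists a.
by rewrite card_imset // cardsT card_ord.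
Qed.

Lemma card_sum_ind (T : finType) (P : pred T) : #|[set i | P i]| = (\sum_i (P i : nat))%N.
Proof. rewrite -sum1_card big_mkcond /=; apply: eq_bigr=> i _; rewrite inE; by case: (P i). Qed.

Lemma sum_lcnt : (\sum_X lcnt X = n * t)%N.
Proof.
rewrite /lcnt; under eq_bigr do rewrite card_sum_ind.
rewrite exchange_big /=.
under eq_bigr=> i _ do rewrite -card_sum_ind card_listed.
by rewrite sum_nat_const card_ord.
Qed.

Lemma part_top (P : pred 'I_m) : #|[set i | P (top i)]| = (\sum_(X | P X) pcnt X)%N.
Proof.
rewrite /pcnt; under [in RHS]eq_bigr do rewrite card_sum_ind.
rewrite card_sum_ind exchange_big /=; apply: eq_bigr=> i _.
rewrite big_mkcond (bigD1 (top i)) //= eqxx big1 ?addn0; first by case: (P _).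
by move=> X /negbTE H; rewrite eq_sym H; case: (P X).
Qed.

Lemma pcnt_le_lcnt X : (pcnt X <= lcnt X)%N.
Proof.
apply: subset_leq_card; apply/subsetP=> i; rewrite !inE => /eqP <-.
by apply/existsP; exists (Ordinal ht).
Qed.

Lemma lcnt_le_n X : (lcnt X <= n)%N.
Proof. by rewrite -[X in (_ <= X)%N](card_ord n) max_card. Qed.

Lemma sum_cond_le (T : finType) (P : pred T) (F : T -> nat) :
  (\sum_(X | P X) F X <= \sum_X F X)%N.
Proof. rewrite big_mkcond /=; apply: leq_sum=> X _; by case: (P X). Qed.

Lemma sum_cond_const (T : finType) (P : pred T) (c : nat) :
  (\sum_(X | P X) c = (\sum_(X | P X) 1) * c)%N.
Proof. by rewrite big_distrl /=; apply: eq_bigr=> X _; rewrite mul1n. Qed.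

Hypothesis htm : (t <= m)%N.

Lemma massA : (0 < n)%N -> (2 * \sum_(X | ~~ candA X) pcnt X <= n - 1)%N.
Proof.
move=> n0; have m0 : (0 < m)%N by apply: leq_trans ht htm.
rewrite -(leq_pmul2l m0) mulnA big_distrr /=.
apply: (@leq_trans (\sum_(X | ~~ candA X) (n - 1))%N).
  apply: leq_sum=> X; rewrite /candA -ltnNge => H; rewrite mulnC mulnA; lia.
apply: leq_trans (sum_cond_le _ _) _; by rewrite sum_nat_const card_ord.
Qed.

Lemma massB : (0 < n)%N -> (8 * \sum_(X | ~~ candB X) lcnt X < n)%N.
Proof.
move=> n0.
set L := (\sum_(X | ~~ candB X) lcnt X)%N.
set c := (\sum_(X | ~~ candB X) 1)%N.
set cB := (\sum_(X | candB X) 1)%N.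
have hc : (cB + c = m)%N.
  transitivity (\sum_(X < m) 1)%N; first by rewrite (bigID candB).
  by rewrite sum_nat_const card_ord muln1.
have h1 : (8 * kk * L <= c * (n - 1))%N.
  rewrite big_distrr /= /c -sum_cond_const; apply: leq_sum=> X.
  rewrite /candB -ltnNge; lia.
have h2 : (n * t <= cB * n + L)%N.
  rewrite -sum_lcnt (bigID candB) /= leq_add2r /cB -sum_cond_const.
  by apply: leq_sum=> X _; apply: lcnt_le_n.
move: h1 h2; rewrite /kk => h1 h2.
have h3 : (c * n <= (m - t) * n + L)%N.
  have hB : cB = (m - c)%N by lia.
  rewrite hB in h2.
  have hcm : (c <= m)%N by lia.
  have : ((m - c) * n + c * n = m * n)%N by rewrite -mulnDl subnK.
  have : ((m - t) * n + t * n = m * n)%N by rewrite -mulnDl subnK.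
  nia.
have h4 : ((8 * (m - t + 1) - 1) * L <= (m - t) * n)%N.
  have : (c * (n - 1) <= c * n)%N by rewrite leq_mul2l leq_subr orbT.
  nia.
set q := (m - t)%N in h4 *.
nia.
Qed.

Lemma mass : (0 < n)%N -> (n < 4 * #|[set i | cand (top i)]|)%N.
Proof.
move=> n0.
have e : (#|[set i | cand (top i)]| + #|[set i | ~~ cand (top i)]| = n)%N.
  rewrite !card_sum_ind -big_split /=.
  transitivity (\sum_(i < n) 1)%N; last by rewrite sum_nat_const card_ord muln1.
  by apply: eq_bigr=> i _; case: (cand _).
have e2 : (#|[set i | ~~ cand (top i)]| <=
   #|[set i | ~~ candA (top i)]| + #|[set i | ~~ candB (top i)]|)%N.
  rewrite !card_sum_ind -big_split /=; apply: leq_sum=> i _.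
  by rewrite /cand; case: (candA _); case: (candB _).
rewrite !(part_top (fun X => ~~ candA X)) !(part_top (fun X => ~~ candB X)) in e2.
have e3 : (\sum_(X | ~~ candB X) pcnt X <= \sum_(X | ~~ candB X) lcnt X)%N.
  by apply: leq_sum=> X _; apply: pcnt_le_lcnt.
have := massA n0; have := massB n0.
lia.
Qed.

Lemma exists_cand : (0 < n)%N -> exists W, cand W.
Proof.
move=> n0; have := mass n0.
case: (set_0Vmem [set i | cand (top i)]) => [->|[i]]; first by rewrite cards0.
by rewrite inE => H _; exists (top i).
Qed.

Lemma beats_total W Z : ~~ beats W Z -> beats Z W.
Proof. rewrite /beats -ltnNge; exact: ltnW. Qed.

Lemma king W Z : good W -> cand Z -> ~~ beats W Z ->
  exists Y, [/\ cand Y, beats W Y & beats Y Z].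
Proof.
case/andP=> cW /forallP gW cZ nWZ.
case: (boolP [exists Y, [&& cand Y, beats W Y & beats Y Z]]).
  by case/existsP=> Y /and3P [*]; exists Y.
rewrite negb_exists => /forallP H.
have : (score W < score Z)%N.
  apply: proper_card; apply/properP; split.
    apply/subsetP=> X; rewrite !inE => /andP [cX bWX]; rewrite cX /=.
    have := H X; rewrite cX bWX /= => /beats_total.
    done.
  by exists Z; rewrite !inE ?cZ /beats ?leqnn // negb_and nWZ orbT.
by have := gW Z; rewrite cZ /= leqNgt => /negbTE ->.
Qed.

Lemma beats_bound W Z : cand W -> W != Z -> beats W Z -> (n <= 16 * kk * Sc W Z)%N.
Proof.
case/andP=> _; rewrite /candB /beats => hB nWZ bWZ.
have := lcnt_le_S nWZ. nia.
Qed.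

Lemma know_pref rank i W X : extends rank st -> know i W X -> prefers rank i W X.
Proof.
move=> ext /existsP [a /andP [/eqP Ha /forallP Hb]]; rewrite /prefers -Ha ext.
case: (ltnP (rank i X) t) => [lt|ge]; last by apply: leq_trans ge.
have e : rank i (st i (Ordinal lt)) = rank i X by apply: val_inj; rewrite /= ext.
have := Hb (Ordinal lt); rewrite (perm_inj e) eqxx /=; exact.
Qed.

Lemma top_pref rank i X : extends rank st -> X != top i -> prefers rank i (top i) X.
Proof.
move=> ext nX; rewrite /prefers /top ext /= lt0n; apply/negP=> /eqP H.
case/negP: nX; apply/eqP; apply: (@perm_inj _ (rank i)); apply: val_inj.
by rewrite /= H ext.
Qed.

End Rule.

From mathcomp Require Import reals.
From mathcomp Require Import ring lra.
Import Order.TTheory GRing.Theory Num.Theory.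
Local Open Scope ring_scope.

Lemma avg (R : realDomainType) (I : finType) (T : {set I}) (F : I -> R) :
  T != set0 -> exists2 i, i \in T & #|T|%:R * F i <= \sum_(j in T) F j.
Proof.
move=> T0.
case: (boolP [exists i, (i \in T) && (#|T|%:R * F i <= \sum_(j in T) F j)]).
  by case/existsP=> i /andP [*]; exists i.
rewrite negb_exists => /forallP H; exfalso.
have : \sum_(i in T) \sum_(j in T) F j < \sum_(i in T) #|T|%:R * F i.
  apply: ltr_sum.
    by case/set0Pn: T0 => x xT; apply/hasP; exists x; rewrite ?mem_index_enum.
  by move=> i iT; have := H i; rewrite iT /= -ltNge.
by rewrite sumr_const -mulr_sumr mulr_natl ltxx.
Qed.

Section Metric.
Variables (R : realType) (m t n : nat) (st : 'I_n -> 'I_t -> 'I_m).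
Variables (ht : (0 < t)%N) (htm : (t <= m)%N).
Hypothesis inj : forall i, injective (st i).
Variable d : 'I_n + 'I_m -> 'I_n + 'I_m -> R.
Hypothesis pm : is_pseudometric d.
Variable rank : 'I_n -> {perm 'I_m}.
Hypothesis ext : extends rank st.
Hypothesis cons : metric_consistent_full d rank.

Let D i X := d (inl i) (inr X).
Let E X Y := d (inr X) (inr Y).

Lemma D_ge0 i X : 0 <= D i X.
Proof. by case: pm => _ [h _]; apply: h. Qed.
Lemma E_ge0 X Y : 0 <= E X Y.
Proof. by case: pm => _ [h _]; apply: h. Qed.
Lemma E_sym X Y : E X Y = E Y X.
Proof. by case: pm => _ [_ [h _]]; rewrite /E h. Qed.
Lemma E_xx X : E X X = 0.
Proof. by case: pm => h _; rewrite /E h. Qed.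
Lemma E_tri X Y Z : E X Z <= E X Y + E Y Z.
Proof. by case: pm => _ [_ [_ h]]; apply: h. Qed.
Lemma E_le i X Y : E X Y <= D i X + D i Y.
Proof.
case: pm => _ [_ [hs h]]; rewrite /E /D.
by apply: le_trans (h _ (inl i) _) _; rewrite (hs (inr X)).
Qed.
Lemma D_le i X Y : D i X <= D i Y + E Y X.
Proof. by case: pm => _ [_ [_ h]]; apply: h. Qed.

Lemma SC_le X Y : SC d X <= SC d Y + n%:R * E Y X.
Proof.
rewrite /SC mulr_natl -[X in _ *+ X](card_ord n) -sumr_const -big_split /=.
by apply: ler_sum => i _; apply: D_le.
Qed.

Lemma SC_ge0 X : 0 <= SC d X.
Proof. by apply: sumr_ge0 => i _; apply: D_ge0. Qed.

Lemma sub_SC (T : {set 'I_n}) X : \sum_(i in T) D i X <= SC d X.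
Proof.
rewrite /SC [X in _ <= X](bigID (mem T)) /= lerDl.
by apply: sumr_ge0 => i _; apply: D_ge0.
Qed.

Lemma step (T : {set 'I_n}) W Y V (a : nat) :
  (forall i, i \in T -> D i W <= D i Y) -> (n <= a * #|T|)%N ->
  n%:R * E W Y <= 2 * a%:R * SC d V + 2 * n%:R * E Y V.
Proof.
move=> HT ha.
have h1 : #|T|%:R * E W Y <= 2 * SC d V + 2 * #|T|%:R * E Y V.
  apply: (@le_trans _ _ (\sum_(i in T) (2 * D i V + 2 * E Y V))).
    rewrite mulr_natl -sumr_const; apply: ler_sum => i iT.
    have := E_le i W Y; have := HT i iT; have := D_le i Y V; rewrite (E_sym V Y).
    lra.
  rewrite big_split /= -mulr_sumr sumr_const -mulr_natr.
  have := sub_SC T V; lra.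
have hs : (#|T| <= n)%N by rewrite -[X in (_ <= X)%N](card_ord n) max_card.
have hn : (n%:R : R) <= a%:R * #|T|%:R by rewrite -natrM ler_nat.
have hs' : (#|T|%:R : R) <= n%:R by rewrite ler_nat.
have e0 := E_ge0 W Y; have e1 := E_ge0 Y V; have s0 := SC_ge0 V.
case: (posnP #|T|) => [T0|Tp].
  move: hn; rewrite T0 mulr0 => hn.
  have : (n%:R : R) = 0 by apply/le_anti; rewrite hn ler0n.
  move=> ->; have a0 : (0 : R) <= a%:R by [].
  have := mulr_ge0 a0 s0; nra.
have Tp' : (0 : R) < #|T|%:R by rewrite ltr0n.
rewrite -(ler_pM2l Tp').
set s := (#|T|%:R : R) in h1 hn hs' Tp' *.
set N := (n%:R : R) in hn hs' *.
have a0 : (0 : R) <= a%:R by [].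
nra.
Qed.

Lemma reduction X : (0 < n)%N -> exists2 Z, cand st ht Z & SC d Z <= 9 * SC d X.
Proof.
move=> n0; have hm := mass ht inj htm n0.
set T := [set i | cand st ht (top st ht i)] in hm.
have T0 : T != set0 by apply/eqP=> e; move: hm; rewrite e cards0.
case: (avg (fun i => D i X) T0) => i iT hi.
exists (top st ht i); first by move: iT; rewrite inE.
have hD : D i (top st ht i) <= D i X.
  case: (eqVneq X (top st ht i)) => [->|ne]; first by [].
  by apply: cons; apply: top_pref.
have hE := E_le i (top st ht i) X.
have hsc := SC_le (top st ht i) X; rewrite E_sym in hsc.
have hsub := sub_SC T X.
have hn : (n%:R : R) <= 4 * #|T|%:R by rewrite -natrM ler_nat ltnW.
have d0 := D_ge0 i X; have e0 := E_ge0 (top st ht i) X.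
have n0' : (0 : R) <= n%:R by [].
have h1 : n%:R * E (top st ht i) X <= n%:R * (2 * D i X).
  by apply: ler_wpM2l => //; lra.
have h2 : n%:R * D i X <= 4 * #|T|%:R * D i X by apply: ler_wpM2r.
lra.
Qed.

Lemma stepWZ W Z V : cand st ht W -> W != Z -> beats st W Z ->
  n%:R * E W Z <= 2 * (16 * kk m t)%:R * SC d V + 2 * n%:R * E Z V.
Proof.
move=> cW nWZ bWZ; apply: (step (T := [set i | know st i W Z])).
  by move=> i; rewrite inE => hk; apply: cons; apply: (know_pref ext hk).
exact: (beats_bound inj htm cW nWZ bWZ).
Qed.

Lemma metric_main W X : (0 < n)%N -> good st ht W ->
  SC d W <= (1161 * kk m t)%:R * SC d X.
Proof.
move=> n0 gW; have cW : cand st ht W by case/andP: gW.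
case: (reduction X n0) => Z cZ hZ.
have k1 : (1 <= kk m t)%N by rewrite /kk addn1.
have k1' : (1 : R) <= (kk m t)%:R by rewrite ler1n.
have sX := SC_ge0 X; have sZ := SC_ge0 Z.
suff h : SC d W <= (1 + 128 * (kk m t)%:R) * SC d Z.
  rewrite natrM.
  have : (1 + 128 * (kk m t)%:R) * SC d Z <= (1 + 128 * (kk m t)%:R) * (9 * SC d X).
    by apply: ler_wpM2l => //; lra.
  nra.
set k := (kk m t)%:R.
have hk : ((16 * kk m t)%:R : R) = 16 * k by rewrite natrM.
have n0' : (0 : R) <= n%:R by [].
have hsc := SC_le W Z; rewrite E_sym in hsc.
have hkS : 0 <= k * SC d Z by apply: mulr_ge0 => //; lra.
case: (eqVneq W Z) => [e|nWZ]; first by rewrite e; nra.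
case: (boolP (beats st W Z)) => [bWZ|nb].
  have := stepWZ Z cW nWZ bWZ; rewrite E_xx hk; nra.
case: (king gW cZ nb) => Y [cY bWY bYZ].
have nWY : W != Y by apply/eqP=> e; move: nb; rewrite e bYZ.
have nYZ : Y != Z by apply/eqP=> e; move: nb; rewrite -e bWY.
have s1 := stepWZ Z cW nWY bWY; have s2 := stepWZ Z cY nYZ bYZ.
rewrite E_xx hk in s1 s2.
have t1 := E_tri W Y Z.
have : n%:R * E W Z <= n%:R * (E W Y + E Y Z) by apply: ler_wpM2l.
lra.
Qed.

End Metric.

Section Util.
Variables (R : realType) (m t n : nat) (st : 'I_n -> 'I_t -> 'I_m).
Variables (ht : (0 < t)%N).
Variable u : 'I_n -> 'I_m -> R.
Hypothesis us : unit_sum u.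
Variable rank : 'I_n -> {perm 'I_m}.
Hypothesis ext : extends rank st.
Hypothesis ucons : util_consistent_full u rank.

Lemma u_le1 i X : u i X <= 1.
Proof.
case: (us i) => h0 hs; rewrite -hs (bigD1 X) //= lerDl.
by apply: sumr_ge0 => Y _; apply: h0.
Qed.

Lemma SW_le_n X : SW u X <= n%:R.
Proof.
rewrite /SW; apply: le_trans (ler_sum _ (fun i _ => u_le1 i X)) _.
by rewrite sumr_const card_ord.
Qed.

Lemma top_ge i : 1 <= m%:R * u i (top st ht i).
Proof.
case: (us i) => h0 hs; rewrite -{1}hs.
have hX : forall X, u i X <= u i (top st ht i).
  move=> X; case: (eqVneq X (top st ht i)) => [->|ne]; first by [].
  by apply: ucons; apply: top_pref.
apply: le_trans (ler_sum _ (fun X _ => hX X)) _.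
by rewrite sumr_const card_ord mulr_natl.
Qed.

Lemma SW_ge W : (pcnt st ht W)%:R <= m%:R * SW u W.
Proof.
rewrite /pcnt card_sum_ind natr_sum /SW mulr_sumr; apply: ler_sum => i _.
case: eqP => [<-|_]; first by apply: top_ge.
by apply: mulr_ge0 => //; case: (us i) => h0 _; apply: h0.
Qed.

Lemma util_main W X : cand st ht W -> SW u X <= (2 * m ^ 2)%:R * SW u W.
Proof.
case/andP=> hA _; move: hA; rewrite /candA => hA.
have h1 := SW_le_n X; have h2 := SW_ge W.
have hA' : (n%:R : R) <= 2 * m%:R * (pcnt st ht W)%:R by rewrite -!natrM ler_nat.
rewrite natrM natrX.
have : 2 * m%:R * (pcnt st ht W)%:R <= 2 * m%:R * (m%:R * SW u W).
  by apply: ler_wpM2l => //; apply: mulr_ge0.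
nra.
Qed.
End Util.

Theorem mainTheorem9 :
  exists C1 C2 : nat,
  forall m t : nat, (1 <= t <= m)%N ->
  exists f : forall n : nat, ('I_n -> 'I_t -> 'I_m) -> 'I_m,
  forall (R : realType) (n : nat) (st : 'I_n -> 'I_t -> 'I_m),
    (forall i, injective (st i)) ->
    (forall d : 'I_n + 'I_m -> 'I_n + 'I_m -> R,
       is_pseudometric d -> metric_consistent d st ->
       forall X : 'I_m, SC d (f n st) <= (C1 * (m - t + 1))%:R * SC d X) /\
    (forall u : 'I_n -> 'I_m -> R,
       unit_sum u -> util_consistent u st ->
       forall X : 'I_m, SW u X <= (C2 * m ^ 2)%:R * SW u (f n st)).
Proof.
exists 1161%N, 2%N => m t /andP [ht htm].
have m0 : (0 < m)%N by apply: leq_trans ht htm.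
exists (fun n st => odflt (Ordinal m0) [pick W | good st ht W]).
move=> R n st inj.
have key : (0 < n)%N -> good st ht (odflt (Ordinal m0) [pick W | good st ht W]).
  move=> n0; case: pickP => [W gW //|none].
  case: (exists_cand ht inj htm n0) => W0 cW0.
  case: (@fintype.arg_maxnP _ W0 (cand st ht) (score st ht) cW0) => W cW hW.
  have : good st ht W.
    by rewrite /good cW /=; apply/forallP => X; apply/implyP => cX; apply: hW.
  by rewrite none.
split.
  move=> d pm [rank [ext cons]] X.
  case: (posnP n) => [n0|n0].
    by subst n; rewrite /SC !big_ord0 mulr0.
  exact: (metric_main htm inj pm ext cons X n0 (key n0)).
move=> u us [rank [ext ucons]] X.
case: (posnP n) => [n0|n0].
  by subst n; rewrite /SW !big_ord0 mulr0.
by case/andP: (key n0) => cW _; apply: (util_main us ext ucons).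
Qed.
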